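(* Let $n,r$ be positive integers, and let $M(n,r)$ be the maximum of $\mathcal{R}(\mathcal{F})=\Delta(\mathcal{F})/\delta(\mathcal{F})$ over all maximal intersecting families $\mathcal{F}\subseteq\binom{[n]}{r}$ with $\bigcup\mathcal{F}=[n]$. (i) For any values of $n$ and $r$, $M(n,r)\le n+r^r$. In particular, if $r<\frac{\log n}{\log\log n}$, then $M(n,r)\le(1+o(1))n$ (as $n\to\infty$). (ii) If $2r+2<n$, then \[ M(n,r)\ \ge\ n-2r+3-\frac{n-2r+2}{\binom{2r-3}{r-2}}. \] In particular, if $r=r(n)\to\infty$ and $r<\frac{\log n}{\log\log n}$, then $M(n,r)\sim n$ (i.e. $M(n,r)/n\to 1$ as $n\to\infty$).
   Context: $[n]=\{1,\dots,n\}$ and $\binom{[n]}{r}$ denotes the family of all $r$-element subsets of $[n]$. A family $\mathcal{F}$ of sets is intersecting if $F_1\cap F_2\neq\emptyset$ for all $F_1,F_2\in\mathcal{F}$. A family $\mathcal{F}\subseteq\binom{[n]}{r}$ is maximal intersecting if it is intersecting and for every $G\in\binom{[n]}{r}\setminus\mathcal{F}$ there is $F\in\mathcal{F}$ with $F\cap G=\emptyset$. For $x\in[n]$, the degree $d(x)$ is the number of sets of $\mathcal{F}$ containing $x$; $\Delta(\mathcal{F})$ and $\delta(\mathcal{F})$ are the maximum and minimum degree over $x\in[n]$. The condition $\bigcup\mathcal{F}=[n]$ guarantees $\delta(\mathcal{F})>0$. Asymptotic notation ($o(1)$, $\sim$) refers to $n\to\infty$ with $r=r(n)$. *)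

(* Defs.v *)
From HB Require Import structures.
From mathcomp Require Import all_boot all_order all_algebra.
From mathcomp Require Import all_classical all_reals all_analysis.
Set Implicit Arguments. Unset Strict Implicit. Unset Printing Implicit Defensive.
Import Order.TTheory GRing.Theory Num.Theory.

Section Fam.
Variable n : nat.
Implicit Types (F : {set {set 'I_n}}) (r : nat).

Definition intersecting F : bool :=
  [forall A in F, forall B in F, A :&: B != finset.set0].

Definition max_intersecting r F : bool :=
  [&& [forall A in F, #|A| == r], intersecting F &
      [forall G : {set 'I_n}, ((#|G| == r) && (G \notin F)) ==>
                              [exists A in F, A :&: G == finset.set0]]].

Definition covers F : bool := \bigcup_(A in F) A == [set: 'I_n].

Definition deg F (x : 'I_n) : nat := #|[set A in F | x \in A]|.

Definition Delta F : nat := \max_(x : 'I_n) deg F x.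
(* every degree is <= #|F|, so #|F| serves as neutral element for min *)
Definition delta F : nat := \big[minn/#|F|]_(x : 'I_n) deg F x.

Definition ratio (R : realType) F : R := ((Delta F)%:R / (delta F)%:R)%R.
End Fam.

(* M(n,r): the maximum of the ratio over all maximal intersecting families
   F in binom([n],r) with union [n]  (0 if there is no such family). *)
Definition M (R : realType) (n r : nat) : R :=
  \big[Num.max/0%R]_(F : {set {set 'I_n}} | max_intersecting r F && covers F)
     ratio R F.

(* Main.v *)
Require Import Defs.
From HB Require Import structures.
From mathcomp Require Import all_boot zify.
Set Implicit Arguments. Unset Strict Implicit. Unset Printing Implicit Defensive.

Lemma card_bigcup_le (T I : finType) (P : {pred I}) (f : I -> {set T}) :
  #|\bigcup_(i in P) f i| <= \sum_(i in P) #|f i|.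
Proof.
elim/big_rec2: _ => [|i U s _ h]; first by rewrite cards0.
by rewrite cardsU (leq_trans (leq_subr _ _)) // leq_add2l.
Qed.

Lemma exists_sub (T : finType) (X : {set T}) k :
  k <= #|X| -> exists Y : {set T}, Y \subset X /\ #|Y| = k.
Proof.
move=> hk; exists [set x in take k (enum X)]; split.
  by apply/subsetP=> x; rewrite inE => /mem_take; rewrite mem_enum.
rewrite cardsE (card_uniqP _) ?take_uniq ?enum_uniq // size_take -cardE.
by case: ltnP => // h; apply/eqP; rewrite eqn_leq hk h.
Qed.

Section UB.
Variable n : nat.
Implicit Types (F : {set {set 'I_n}}) (r : nat) (G H S : {set 'I_n}).

Definition transv F (G : {set 'I_n}) := [forall B in F, B :&: G != set0].
Definition minT F r (S : {set 'I_n}) := [set G : {set 'I_n} |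
  [&& #|G| == r, S \subset G, transv F G & [forall z in G, ~~ transv F (G :\ z)]]].

Lemma transv_sub F G H : G \subset H -> transv F G -> transv F H.
Proof.
move=> sGH /forallP tG; apply/forallP=> B; apply/implyP=> BF.
move: (implyP (tG B) BF); apply: contraNN; rewrite -!subset0 => h.
exact: subset_trans (setIS B sGH) h.
Qed.

Lemma minT_card F r k S : 0 < r -> (forall B, B \in F -> #|B| <= r) ->
  r <= #|S| + k -> #|minT F r S| <= r ^ k.
Proof.
elim: k S => [|k IH] S r0 hB hS.
  rewrite expn0; apply: leq_trans (_ : #|[set S]| <= 1); last by rewrite cards1.
  apply: subset_leq_card; apply/subsetP=> G; rewrite !inE => /and4P[/eqP cG sSG _ _].
  by rewrite eq_sym eqEcard sSG cG -[#|S|]addn0.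
case tS: (transv F S).
  apply: leq_trans (_ : #|[set S]| <= _); last by rewrite cards1 expn_gt0 r0.
  apply: subset_leq_card; apply/subsetP=> G; rewrite !inE => /and4P[_ sSG _ /forallP mG].
  rewrite eqEsubset sSG andbT; apply/subsetP=> z zG; apply/negPn/negP=> zS.
  have := implyP (mG z) zG; rewrite (transv_sub _ tS) //.
  apply/subsetP=> w wS; rewrite !inE (subsetP sSG _ wS) andbT.
  by apply/eqP=> wz; rewrite -wz wS in zS.
move/negbT: tS; rewrite negb_forall => /existsP[B]; rewrite negb_imply negbK.
case/andP=> BF /eqP BS.
apply: leq_trans (_ : #|\bigcup_(b in B) minT F r (b |: S)| <= _).
  apply: subset_leq_card; apply/subsetP=> G GT.
  have := GT; rewrite inE => /and4P[cG sSG tG mG].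
  have := implyP (forallP tG B) BF; case/set0Pn => b; rewrite inE => /andP[bB bG].
  by apply/bigcupP; exists b => //; rewrite inE cG tG mG subUset sub1set bG sSG.
apply: leq_trans (card_bigcup_le _ _) _.
apply: leq_trans (_ : \sum_(b in B) r ^ k <= _).
  apply: leq_sum => b bB; apply: IH => //.
  have bS : b \notin S.
    apply/negP=> bS; have : b \in B :&: S by rewrite inE bB.
    by rewrite BS inE.
  by rewrite cardsU1 bS; lia.
by rewrite sum_nat_const expnS leq_mul // hB.
Qed.

Lemma deg_pos F (x : 'I_n) : covers F -> 0 < deg F x.
Proof.
move=> /eqP cov; have : x \in \bigcup_(A in F) A by rewrite cov inE.
by case/bigcupP => A AF xA; apply/card_gt0P; exists A; rewrite inE AF xA.
Qed.

Lemma deg_ub F r (x y : 'I_n) : 0 < r -> max_intersecting r F -> covers F ->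
  deg F y <= (n + r ^ r) * deg F x.
Proof.
move=> r0 /and3P[/forallP cF /forallP iF /forallP mF] hC.
have dpos := deg_pos x hC.
set Fx := [set A in F | x \in A].
have inF G : #|G| = r -> transv F G -> G \in F.
  move=> cG tG; apply/negPn/negP => GnF.
  have := implyP (mF G); rewrite cG eqxx GnF => /(_ isT) /existsP[A /andP[AF /eqP AG]].
  by move: (implyP (forallP tG A) AF); rewrite AG eqxx.
have trF G : G \in F -> transv F G.
  move=> GF; apply/forallP=> B; apply/implyP=> BF.
  exact: (implyP (forallP (implyP (iF B) BF) G) GF).
pose z G := odflt x [pick z in G | transv F (G :\ z)].
have zP G : [exists z in G, transv F (G :\ z)] -> (z G \in G) && transv F (G :\ z G).
  by case/existsP=> w hw; rewrite /z; case: pickP => [v hv|/(_ w)]; [|rewrite hw].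
pose phi G := if x \in G then (G, x) else (x |: (G :\ z G), z G).
set D := [set G in F | y \in G].
set D1 := [set G in D | (x \in G) || [exists z in G, transv F (G :\ z)]].
have sD : D \subset D1 :|: minT F r set0.
  apply/subsetP=> G GD; rewrite inE; case: (boolP (G \in D1)) => //= h.
  move: h GD; rewrite !inE => h /andP[GF yG]; move: h; rewrite GF yG /= negb_or => /andP[_ nex].
  rewrite (eqP (implyP (cF G) GF)) eqxx sub0set trF //=.
  apply/forallP=> w; move: nex; rewrite negb_exists => /forallP /(_ w).
  by case: (w \in G); case: transv.
have key G : x \notin G -> z G \in G -> forall w,
    (w \in G) = (w == z G) || ((w != x) && (w \in x |: (G :\ z G))).
  move=> xG zG w; rewrite !inE.
  case: (eqVneq w (z G)) => [->|wz] //=.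
  by case: (eqVneq w x) => [->|wx] /=; [rewrite (negbTE xG)|].
have phiinj : {in D1 &, injective phi}.
  move=> G1 G2; rewrite !inE => /andP[/andP[_ _] h1] /andP[/andP[_ _] h2].
  rewrite /phi; case x1: (x \in G1); case x2: (x \in G2).
  - by case.
  - case=> _ e; move: h2; rewrite x2 /= => /zP /andP[zG _].
    by rewrite -e x2 in zG.
  - case=> _ e; move: h1; rewrite x1 /= => /zP /andP[zG _].
    by rewrite e x1 in zG.
  - case=> eA ez; move: h1 h2; rewrite x1 x2 /= => /zP/andP[z1 _] /zP/andP[z2 _].
    apply/setP=> w; rewrite (key G1) ?x1 // (key G2) ?x2 //.
    by rewrite eA ez.
have phiim : phi @: D1 \subset setX Fx [set: 'I_n].
  apply/subsetP=> p /imsetP[G]; rewrite !inE => /andP[/andP[GF _] h] ->.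
  rewrite /phi; case xG: (x \in G); first by rewrite /= GF xG.
  move: h; rewrite xG /= => /zP/andP[zG tG].
  rewrite setU11 !andbT; apply: inF; last first.
    by apply: transv_sub tG; apply: subsetUr.
  rewrite cardsU1 !inE xG andbF /= -(eqP (implyP (cF G) GF)) (cardsD1 (z G) G) zG.
  by [].
have c1 : #|D1| <= #|Fx| * n.
  rewrite -(card_in_imset phiinj); apply: leq_trans (subset_leq_card phiim) _.
  by rewrite cardsX cardsT card_ord.
have c2 : #|minT F r set0| <= r ^ r.
  apply: minT_card => //; last by rewrite cards0.
  by move=> B BF; rewrite (eqP (implyP (cF B) BF)).
have c3 : #|D| <= #|D1| + #|minT F r set0|.
  by apply: leq_trans (subset_leq_card sD) _; rewrite cardsU leq_subr.
rewrite /deg -/Fx -/D mulnDl [n * _]mulnC.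
apply: leq_trans c3 _; apply: leq_add => //.
by apply: leq_trans c2 _; rewrite leq_pmulr.
Qed.
End UB.

Lemma card_lt (n b : nat) : b <= n -> #|[set i : 'I_n | i < b]| = b.
Proof.
elim: b => [|b IH] hb.
  by apply/eqP; rewrite cards_eq0; apply/eqP/setP=> i; rewrite !inE.
have hbn : b < n by [].
rewrite (_ : [set i : 'I_n | i < b.+1] = Ordinal hbn |: [set i : 'I_n | i < b]).
  by rewrite cardsU1 inE /= ltnn IH // ltnW.
by apply/setP=> i; rewrite !inE ltnS leq_eqVlt -val_eqE.
Qed.

Lemma meet_card (T : finType) (X Y Z : {set T}) : X \subset Z -> Y \subset Z ->
  #|Z| < #|X| + #|Y| -> X :&: Y != set0.
Proof.
move=> sX sY h; apply/negP => /eqP e.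
have : #|X :|: Y| <= #|Z| by apply: subset_leq_card; rewrite subUset sX sY.
by rewrite cardsU e cards0 subn0 => h2; move: (leq_trans h h2); rewrite ltnn.
Qed.

Lemma bigmin_seq (T : eqType) (s : seq T) (f : T -> nat) a j :
  j \in s -> \big[minn/a]_(i <- s) f i <= f j.
Proof.
elim: s => // x s IH; rewrite big_cons in_cons => /orP[/eqP->|/IH h].
  exact: geq_minl.
exact: leq_trans (geq_minr _ _) h.
Qed.

Section LB.
Variables (n r : nat).
Hypothesis hr : 1 < r.
Hypothesis hn : 2 * r + 2 < n.
Let K := 2 * r - 2.
Let n0 : 0 < n. Proof. lia. Qed.
Let y : 'I_n := Ordinal n0.
Let L := [set i : 'I_n | i < K].
Let S := L :\ y.
Let T := ~: L.

Let yL : y \in L. Proof. by rewrite inE /=; lia. Qed.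
Let yS : y \notin S. Proof. by rewrite !inE eqxx. Qed.
Let yT : y \notin T. Proof. by rewrite inE yL. Qed.
Let cL : #|L| = K. Proof. by rewrite card_lt //; lia. Qed.
Let cS : #|S| = 2 * r - 3. Proof. by move: (cardsD1 y L); rewrite yL cL /S; lia. Qed.
Let cT : #|T| = n - K. Proof. move: (cardsC L); rewrite cL /T => h. have e := card_ord n. rewrite e in h. lia. Qed.

Let part (A : {set 'I_n}) : #|A| = (y \in A) + #|A :&: S| + #|A :&: T|.
Proof.
rewrite -(cardsID T A) addnC.
suff -> : #|A :\: T| = (y \in A) + #|A :&: S| by [].
have e : A :\: T = A :&: L.
  by apply/setP=> w; rewrite /T !inE negbK andbC.
rewrite e.
rewrite (cardsD1 y (A :&: L)) inE yL andbT; congr (_ + _).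
by apply: eq_card => w; rewrite /S !inE andbCA.
Qed.

Let inST w : w \in S -> w \notin T.
Proof. by rewrite !inE => /andP[_ ->]. Qed.

Let trich w : [|| w == y, w \in S | w \in T].
Proof. by rewrite !inE; case: (w == y); case: (w < K). Qed.

Definition F0 := [set A : {set 'I_n} | (#|A| == r) && (#|A :&: T| <= (y \in A))].

Let F0P A : (A \in F0) = (#|A| == r) && (#|A :&: T| <= (y \in A)).
Proof. by rewrite inE. Qed.

Let F0S A : A \in F0 -> (y \in A -> r <= #|A :&: S| + 2) /\ (y \notin A -> #|A :&: S| = r).
Proof.
rewrite F0P => /andP[/eqP cA hT]; move: (part A); rewrite cA.
case: (y \in A) hT => /= hT; split => //; lia.
Qed.

Lemma F0_int : intersecting F0.
Proof.
apply/forallP=> A; apply/implyP=> AF; apply/forallP=> B; apply/implyP=> BF.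
case yA: (y \in A); case yB: (y \in B).
- by apply/set0Pn; exists y; rewrite inE yA yB.
all: have [hA1 hA2] := F0S AF; have [hB1 hB2] := F0S BF.
all: suff : (A :&: S) :&: (B :&: S) != set0 by
       case/set0Pn=> w; rewrite !inE => /andP[/andP[wA _] /andP[wB _]];
       apply/set0Pn; exists w; rewrite inE wA wB.
all: apply: (@meet_card _ _ _ S); rewrite ?subsetIr // cS.
- rewrite hB2 ?yB //; move: (hA1 yA); set a := #|A :&: S|; move=> h; lia.
- rewrite hA2 ?yA //; move: (hB1 yB); set a := #|B :&: S|; move=> h; lia.
- rewrite hA2 ?yA // hB2 ?yB //; set a := #|A :&: S|; lia.
Qed.

Let subL (A X : {set 'I_n}) : A \subset X :|: L -> #|A :&: T| <= #|X|.
Proof.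
move=> sA; apply: subset_leq_card; apply/subsetP=> w; rewrite inE => /andP[wA wT].
by move: (subsetP sA w wA); rewrite inE; move: wT; rewrite /T inE => /negbTE ->; rewrite orbF.
Qed.

Let SL : S \subset L. Proof. exact: subsetDl. Qed.

Let mk0 (Y : {set 'I_n}) : Y \subset S -> #|Y| = r -> Y \in F0.
Proof.
move=> sY cY; rewrite F0P cY eqxx /=.
have := @subL Y set0; rewrite cards0 set0U leqn0 => /(_ (subset_trans sY SL)) /eqP ->.
by [].
Qed.

Let mk1 (D : {set 'I_n}) : D \subset S -> #|D| = r - 1 -> y |: D \in F0.
Proof.
move=> sD cD; rewrite F0P cardsU1 cD setU11.
have yD : y \notin D by apply/negP=> /(subsetP sD); rewrite (negbTE yS).
rewrite yD /= (_ : 1 + (r - 1) = r); last by lia.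
rewrite eqxx /=; apply: leq_trans (@subL _ set0 _) _; rewrite ?cards0 //.
by rewrite set0U subUset sub1set yL (subset_trans sD SL).
Qed.

Let mk2 (t : 'I_n) (C : {set 'I_n}) : t != y -> C \subset S -> t \notin C ->
  #|C| = r - 2 -> y |: (t |: C) \in F0.
Proof.
move=> ty sC tC cC; rewrite F0P setU11.
have yC : y \notin t |: C.
  by rewrite !inE eq_sym (negbTE ty) /=; apply/negP=> /(subsetP sC); rewrite (negbTE yS).
rewrite cardsU1 yC cardsU1 tC cC (_ : 1 + (1 + (r - 2)) = r); last by lia.
rewrite eqxx /=; apply: leq_trans (@subL _ [set t] _) _; rewrite ?cards1 //.
apply/subsetP=> w; rewrite !inE => /orP[/eqP->|/orP[/eqP->|/(subsetP sC) wS]].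
- by apply/orP; right; rewrite /K /=; lia.
- by rewrite eqxx.
- by move: (subsetP SL w wS); rewrite inE => ->; rewrite orbT.
Qed.

Let disj (A G : {set 'I_n}) : A \subset ~: G -> A :&: G == set0.
Proof. by move=> h; rewrite setI_eq0 disjoints_subset. Qed.

Lemma F0_max : [forall G : {set 'I_n}, ((#|G| == r) && (G \notin F0)) ==>
                              [exists A in F0, A :&: G == set0]].
Proof.
apply/forallP=> G; apply/implyP=> /andP[/eqP cG GnF].
have hT : (y \in G) < #|G :&: T| by move: GnF; rewrite F0P cG eqxx /= -ltnNge.
have pG := part G; rewrite cG in pG.
have cSG : #|S :\: G| = 2 * r - 3 - #|G :&: S| by rewrite cardsD cS setIC.
have sSG : S :\: G \subset ~: G by apply/subsetP=> w; rewrite !inE => /andP[->].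
case yG: (y \in G); rewrite yG in hT pG.
  have [Y [sY cY]] : exists Y : {set 'I_n}, Y \subset S :\: G /\ #|Y| = r.
    apply: exists_sub; rewrite cSG; move: pG hT.
    set a := #|G :&: S|; set b := #|G :&: T|; lia.
  apply/existsP; exists Y; rewrite mk0 ?cY //=; last exact: subset_trans sY (subsetDl _ _).
  by apply: disj; apply: subset_trans sY sSG.
case: (boolP (T \subset G)) => [sTG | /subsetPn [t tT tG]].
  have eT : #|G :&: T| = n - K.
    by rewrite -cT; apply: eq_card => w; rewrite inE andbC; case: (boolP (w \in T)) => // /(subsetP sTG) ->.
  have [D [sD cD]] : exists D : {set 'I_n}, D \subset S :\: G /\ #|D| = r - 1.
    apply: exists_sub; rewrite cSG; move: pG hT; rewrite eT /K.
    set a := #|G :&: S|; lia.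
  apply/existsP; exists (y |: D); rewrite mk1 ?cD //=; last exact: subset_trans sD (subsetDl _ _).
  apply: disj; rewrite subUset sub1set !inE yG /=; exact: subset_trans sD sSG.
have [C [sC cC]] : exists C : {set 'I_n}, C \subset S :\: G /\ #|C| = r - 2.
  apply: exists_sub; rewrite cSG; move: pG hT.
  set a := #|G :&: S|; set b := #|G :&: T|; lia.
have ty : t != y by apply/eqP=> e; rewrite e (negbTE yT) in tT.
have tC : t \notin C.
  apply/negP=> /(subsetP sC); rewrite !inE => /andP[_ /andP[_ h]]; by move: tT; rewrite /T !inE h.
apply/existsP; exists (y |: (t |: C)); rewrite mk2 ?cC //=; last exact: subset_trans sC (subsetDl _ _).
apply: disj; rewrite !subUset !sub1set !inE yG tG /=; exact: subset_trans sC sSG.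
Qed.

Lemma F0_cov : covers F0.
Proof.
apply/eqP/setP=> i; rewrite inE; apply/bigcupP.
case: (eqVneq i y) => [->|iy].
  have [D [sD cD]] : exists D : {set 'I_n}, D \subset S /\ #|D| = r - 1.
    by apply: exists_sub; rewrite cS; lia.
  by exists (y |: D); rewrite ?mk1 ?setU11.
have [C [sC cC]] : exists C : {set 'I_n}, C \subset S :\ i /\ #|C| = r - 2.
  apply: exists_sub; have := cardsD1 i S; rewrite cS.
  set b := #|S :\ i|; case: (i \in S) => /=; lia.
have sC' : C \subset S by apply: subset_trans sC (subsetDl _ _).
have iC : i \notin C by apply/negP=> /(subsetP sC); rewrite !inE eqxx.
by exists (y |: (i |: C)); rewrite ?mk2 // !inE eqxx orbT.
Qed.

Lemma F0_deg (t : 'I_n) : t \in T -> (n - K + 1) * deg F0 t <= deg F0 y.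
Proof.
move=> tT.
have ty : t != y by apply/eqP=> e; rewrite e (negbTE yT) in tT.
set Ft := [set A in F0 | t \in A]; set Fy := [set A in F0 | y \in A].
have FtP A : A \in Ft -> [/\ A \in F0, t \in A, y \in A,
      forall w, w \in A -> w \in T -> w = t & #|A :&: S| = r - 2].
  move=> AFt; have /andP[AF tA] : (A \in F0) && (t \in A) by move: AFt; rewrite inE.
  have /andP[/eqP cA hT] : (#|A| == r) && (#|A :&: T| <= (y \in A)) by rewrite -F0P.
  have tAT : t \in A :&: T by rewrite inE tA tT.
  have yA : y \in A.
    by apply/negPn/negP=> /negbTE yA; rewrite yA leqn0 cards_eq0 in hT; rewrite (eqP hT) inE in tAT.
  rewrite yA in hT.
  have AT : forall w, w \in A -> w \in T -> w = t.
    move=> w wA wT; apply/eqP/negPn/negP => wt.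
    have : #|[set w; t]| <= #|A :&: T|.
      by apply: subset_leq_card; rewrite subUset !sub1set tAT inE wA wT.
    by rewrite cards2 wt; move/leq_trans => /(_ _ hT).
  split => //.
  have c1 : #|A :&: T| = 1.
    by apply/eqP; rewrite eqn_leq hT /= card_gt0; apply/set0Pn; exists t.
  by have := part A; rewrite cA yA c1; set a := #|A :&: S|; move=> /= h; lia.
pose f1 (p : {set 'I_n} * 'I_n) := p.2 |: (p.1 :\ t).
pose f2 (A : {set 'I_n}) := y |: (S :\: A).
have memA1 A0 t' : A0 \in Ft -> t' \in T -> forall w,
    (w \in A0) = (w == t) || ((w != t') && (w \in f1 (A0, t'))).
  move=> /FtP[_ tA _ AT _] t'T w; rewrite /f1 /= !inE.
  case: (eqVneq w t) => [->|wt] //=.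
  case: (eqVneq w t') => [e|wt'] //=.
  by subst w; apply/negP => wA; rewrite (AT _ wA t'T) eqxx in wt.
have f1inj : {in setX Ft T &, injective f1}.
  move=> [A1 t1] [A2 t2]; rewrite !in_setX /= => /andP[A1F t1T] /andP[A2F t2T] e.
  have e12 : t1 = t2.
    have : t1 \in f1 (A2, t2) by rewrite -e /f1 /= setU11.
    rewrite /f1 /= !inE => /orP[/eqP //|/andP[t1t t1A]].
    by have [_ _ _ AT _] := FtP _ A2F; move: (AT _ t1A t1T) => e'; rewrite e' eqxx in t1t.
  subst t2; congr (_, _); apply/setP=> w.
  by rewrite (memA1 _ _ A1F t1T) (memA1 _ _ A2F t1T) e.
have f1im : f1 @: setX Ft T \subset Fy.
  apply/subsetP=> B /imsetP[[A t'] ]; rewrite in_setX /= => /andP[AF t'T] ->.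
  have [AF0 tA yA AT cAS] := FtP _ AF.
  have /andP[/eqP cA hT] : (#|A| == r) && (#|A :&: T| <= (y \in A)) by rewrite -F0P.
  rewrite inE /f1 /=; have yB : y \in t' |: (A :\ t) by rewrite !inE [y == t]eq_sym ty yA orbT.
  rewrite yB andbT F0P yB.
  have t'A : t' \notin A :\ t.
    by rewrite !inE; apply/negP=> /andP[t't /AT /(_ t'T) e]; rewrite e eqxx in t't.
  have cAt : #|A :\ t| = r - 1.
    by move: cA; rewrite (cardsD1 t A) tA => <-; rewrite add1n subn1.
  rewrite cardsU1 t'A cAt subnKC; last by apply: leq_trans hr.
  rewrite eqxx /=.
  apply: leq_trans (@subL _ [set t'] _) _; rewrite ?cards1 //.
  apply/subsetP=> w; rewrite !inE => /orP[->//|/andP[wt wA]].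
  apply/orP; right; apply/negPn/negP => wT.
  have wT2 : w \in T by rewrite /T !inE.
  by rewrite (AT w wA wT2) eqxx in wt.
have memA2 A : A \in Ft -> forall w,
    (w \in A) = [|| w == y, w == t | (w \in S) && (w \notin f2 A)].
  move=> /FtP[_ tA yA AT _] w; rewrite /f2.
  case: (eqVneq w y) => [->//|wy]; case: (eqVneq w t) => [->//|wt] /=.
  rewrite in_setU1 in_setD (negbTE wy) /=.
  have := trich w; rewrite (negbTE wy) /= => /orP[wS|wT].
    by rewrite wS /= andbT negbK.
  have wS : w \notin S by apply/negP=> h; move: (inST h); rewrite wT.
  rewrite (negbTE wS) /=.
  by apply/negP=> wA; move: (AT w wA wT) => e; rewrite e eqxx in wt.
have f2inj : {in Ft &, injective f2}.
  by move=> A1 A2 A1F A2F e; apply/setP=> w; rewrite (memA2 _ A1F) (memA2 _ A2F) e.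
have f2im : f2 @: Ft \subset Fy.
  apply/subsetP=> B /imsetP[A AF ->].
  have [_ tA yA AT cAS] := FtP _ AF.
  rewrite inE /f2 setU11 andbT; apply: mk1; first exact: subsetDl.
  by rewrite cardsD cS setIC cAS; lia.
have dis : f1 @: setX Ft T :&: f2 @: Ft = set0.
  apply/setP=> B; rewrite !inE; apply/negP => /andP[/imsetP[[A t'] ] ].
  rewrite in_setX /= => /andP[AF t'T] -> /imsetP[A2 A2F].
  move/setP => /(_ t'); rewrite /f1 /f2 /= in_setU1 eqxx /= in_setU1 in_setD.
  move=> /esym /orP[/eqP e|/andP[_ t'S]].
    by rewrite e (negbTE yT) in t'T.
  by move: (inST t'S); rewrite t'T.
rewrite /deg -/Ft -/Fy.
apply: leq_trans (_ : #|f1 @: setX Ft T :|: f2 @: Ft| <= #|Fy|).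
  rewrite cardsU dis cards0 subn0 (card_in_imset f1inj) (card_in_imset f2inj).
  by rewrite cardsX cT mulnDl mul1n mulnC.
by apply: subset_leq_card; rewrite subUset f1im f2im.
Qed.

Lemma F0_all : [&& max_intersecting r F0, covers F0 & (n - 2 * r + 3) * delta F0 <= Delta F0].
Proof.
apply/and3P; split; [|exact: F0_cov|].
  apply/and3P; split; [|exact: F0_int|exact: F0_max].
  by apply/forallP=> A; apply/implyP; rewrite F0P => /andP[].
have tn : n.-1 < n by lia.
pose t := Ordinal tn.
have tT : t \in T by rewrite /T !inE /= -leqNgt /K; lia.
have h1 := F0_deg tT.
have h2 : delta F0 <= deg F0 t by rewrite /delta bigmin_seq // mem_index_enum.
have h3 : deg F0 y <= Delta F0 by rewrite /Delta (leq_bigmax y).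
rewrite (_ : n - 2 * r + 3 = n - K + 1); last by rewrite /K; lia.
apply: leq_trans h3; apply: leq_trans h1; by rewrite leq_mul2l h2 orbT.
Qed.
End LB.

Lemma LB_family n r : 1 < r -> 2 * r + 2 < n -> exists F : {set {set 'I_n}},
  [&& max_intersecting r F, covers F & (n - 2 * r + 3) * delta F <= Delta F].
Proof. by move=> hr hn; exists (F0 hr hn); apply: F0_all. Qed.


From mathcomp Require Import all_boot all_order all_algebra.
From mathcomp Require Import all_classical all_reals all_analysis.
From mathcomp Require Import zify ring lra.
Import Order.TTheory GRing.Theory Num.Theory.
Local Open Scope classical_set_scope.
Local Open Scope ring_scope.

Lemma deg_le n (F : {set {set 'I_n}}) x : (deg F x <= #|F|)%N.
Proof. by apply: subset_leq_card; apply/fintype.subsetP=> A; rewrite finset.inE => /andP[]. Qed.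

Lemma delta_pos n (F : {set {set 'I_n}}) : (0 < n)%N -> covers F -> (0 < delta F)%N.
Proof.
move=> n0 hC; rewrite /delta; elim/big_ind: _ => //.
- have x : 'I_n := Ordinal n0.
  exact: leq_trans (deg_pos x hC) (deg_le _ _).
- by move=> a b ha hb; rewrite leq_min ha hb.
- by move=> x _; apply: deg_pos.
Qed.

Lemma Delta_le n r (F : {set {set 'I_n}}) : (0 < n)%N -> (0 < r)%N ->
  max_intersecting r F -> covers F -> (Delta F <= (n + r ^ r) * delta F)%N.
Proof.
move=> n0 r0 hF hC; apply/bigmax_leqP => y _; rewrite /delta.
elim/big_ind: _.
- apply: leq_trans (deg_le _ _) _; apply: leq_pmull; lia.
- by move=> a b ha hb; rewrite /minn; case: ltnP.
- by move=> x _; apply: deg_ub.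
Qed.

Lemma M_ub (R : realType) n r : (0 < n)%N -> (0 < r)%N ->
  M R n r <= n%:R + (r ^ r)%:R.
Proof.
move=> n0 r0; rewrite /M; elim/big_ind: _.
- by rewrite addr_ge0.
- by move=> a b ha hb; rewrite ge_max ha hb.
move=> F /andP[hF hC]; rewrite /ratio.
have dpos := delta_pos n0 hC.
rewrite ler_pdivrMr ?ltr0n // -natrD -natrM ler_nat.
exact: Delta_le.
Qed.

Lemma M_lb (R : realType) n r : (1 < r)%N -> (2 * r + 2 < n)%N ->
  (n - 2 * r + 3)%:R <= M R n r.
Proof.
move=> hr hn; have [F /and3P[hF hC hD]] := LB_family hr hn.
have n0 : (0 < n)%N by lia.
have h1 : (n - 2 * r + 3)%:R <= Defs.ratio R F.
  have dpos := delta_pos n0 hC.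
  by rewrite /ratio ler_pdivlMr ?ltr0n // -natrM ler_nat.
have h2 : Defs.ratio R F <= M R n r.
  by rewrite /M; apply: (le_bigmax_cond _ (P := fun F => max_intersecting r F && covers F)); rewrite hF hC.
exact: le_trans h1 h2.
Qed.

Lemma rr_bound (R : realType) (x : R) (r : nat) (c : R) :
  (0 < r)%N -> 0 <= c -> expR 1 <= ln (ln x) -> 4 * c <= ln (ln x) ->
  r%:R < ln x / ln (ln x) -> (r ^ r)%:R <= x * expR (- c).
Proof.
move=> r0 c0 hE hc hr.
set L := ln x in hE hc hr *; set LL := ln L in hE hc hr *.
have e2 : 2 <= expR 1 :> R by have := expR_ge1Dx (1 : R); lra.
have LL1 : 1 <= LL by lra.
have L1 : 1 < L.
  rewrite ltNge; apply/negP => h; have := ln_le0 h; rewrite -/LL; lra.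
have x1 : 1 < x.
  rewrite ltNge; apply/negP => h; have := ln_le0 h; rewrite -/L; lra.
have x0 : 0 < x by lra.
have L0 : 0 < L by lra.
have LL0 : 0 < LL by lra.
have xE : expR L = x by rewrite /L lnK // posrE.
have LE : expR LL = L by rewrite /LL lnK // posrE.
set a := L / LL in hr *.
have a0 : 0 < a by rewrite divr_gt0.
have r1 : 1 <= r%:R :> R by rewrite ler1n.
have rp : 0 < r%:R :> R by lra.
have lnr0 : 0 <= ln (r%:R : R) by rewrite ln_ge0.
have lnra : ln (r%:R : R) <= ln a by rewrite ler_ln ?posrE //; apply: ltW.
have lna : ln a = LL - ln LL by rewrite /a ln_div ?posrE.
have key1 : r%:R * ln (r%:R : R) <= a * ln a.
  apply: le_trans (_ : a * ln (r%:R : R) <= _).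
    by rewrite ler_wpM2r // ltW.
  by rewrite ler_wpM2l // ltW.
have key2 : LL / 4 <= a.
  have h : (LL/2) * (LL/2) <= expR (LL/2) * expR (LL/2).
    have := expR_ge1Dx (LL/2); move=> h.
    apply: ler_pM; lra.
  rewrite -expRD (_ : LL / 2 + LL / 2 = LL) in h; last by field.
  rewrite LE in h.
  rewrite /a ler_pdivlMr //.
  have -> : LL / 4 * LL = (LL/2) * (LL/2) by field.
  exact: h.
have lnLL1 : 1 <= ln LL.
  by rewrite -(expRK 1) ler_ln ?posrE // expR_gt0.
have key3 : c <= a * ln LL.
  have : a <= a * ln LL by rewrite ler_peMr // ltW.
  lra.
have aLL : a * LL = L by rewrite /a divfK // gt_eqF.
have key4 : r%:R * ln (r%:R : R) <= L - c.
  apply: le_trans key1 _; rewrite lna mulrBr aLL; lra.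
rewrite natrX -{1}(lnK (_ : (r%:R : R) \in Num.pos)) ?posrE // -expRM_natl.
rewrite -xE -expRD ler_expR; lra.
Qed.

Lemma rr_small (R : realType) (r : nat -> nat) : (forall n, (0 < r n)%N) ->
  (\forall n \near \oo, (r n)%:R < ln (n%:R : R) / ln (ln (n%:R : R))) ->
  forall eps : R, 0 < eps ->
  exists N, forall k, (N <= k)%N -> ((r k ^ r k)%:R : R) <= eps * k%:R.
Proof.
move=> r0 [N _ hN] eps e0.
pose c := Num.max 0 (- ln eps).
pose B := Num.max (expR 1) (4 * c).
pose X := expR (expR B).
exists (maxn N (Num.Def.archi_bound X)) => k; rewrite geq_max => /andP[hkN hkB].
have X0 : 0 < X by apply: expR_gt0.
have Xk : X <= k%:R.
  apply: le_trans (ltW (archi_boundP (ltW X0))) _; by rewrite ler_nat.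
have k0 : 0 < k%:R :> R by apply: lt_le_trans Xk.
have lk : expR B <= ln (k%:R : R).
  by rewrite -(expRK (expR B)) ler_ln ?posrE.
have llk : B <= ln (ln (k%:R : R)).
  by rewrite -(expRK B) ler_ln ?posrE // (lt_le_trans (expR_gt0 B)).
have c0 : 0 <= c by rewrite le_max lexx.
have hE : expR 1 <= ln (ln (k%:R : R)) by apply: le_trans llk; rewrite le_max lexx.
have hc : 4 * c <= ln (ln (k%:R : R)) by apply: le_trans llk; rewrite le_max lexx orbT.
apply: le_trans (rr_bound (r0 k) c0 hE hc (hN k hkN)) _.
rewrite mulrC ler_wpM2r ?ler0n //.
rewrite -[X in _ <= X](lnK (_ : eps \in Num.pos)) ?posrE // ler_expR.
by rewrite lerNl le_max lexx orbT.
Qed.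

Lemma r_le_rr r : (0 < r)%N -> (r <= r ^ r)%N.
Proof. by case: r => // r' _; rewrite expnS leq_pmulr // expn_gt0. Qed.

Theorem theorem1 (R : realType) :
  (* (i) upper bound *)
  (forall n r : nat, (0 < n)%N -> (0 < r)%N ->
     M R n r <= n%:R + (r ^ r)%:R)
  /\
  (* (i) asymptotic: r < log n / log log n  ==>  M(n,r) <= (1+o(1)) n *)
  (forall r : nat -> nat, (forall n, (0 < r n)%N) ->
     (\forall n \near \oo, (r n)%:R < ln (n%:R : R) / ln (ln (n%:R : R))) ->
     forall eps : R, 0 < eps ->
       \forall n \near \oo, M R n (r n) <= (1 + eps) * n%:R)
  /\
  (* (ii) lower bound *)
  (forall n r : nat, (1 < r)%N -> (2 * r + 2 < n)%N ->
     (n - 2 * r + 3)%:R - (n - 2 * r + 2)%:R / ('C(2 * r - 3, r - 2))%:R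
       <= M R n r)
  /\
  (* (ii) asymptotic: r -> oo and r < log n / log log n  ==>  M(n,r) ~ n *)
  (forall r : nat -> nat, (forall n, (0 < r n)%N) ->
     (forall K : nat, \forall n \near \oo, (K <= r n)%N) ->
     (\forall n \near \oo, (r n)%:R < ln (n%:R : R) / ln (ln (n%:R : R))) ->
     (fun n : nat => M R n (r n) / n%:R) @ \oo --> (1%R : R^o)).
Proof.
split; first exact: M_ub.
split.
  move=> r r0 hR eps e0; have [N hN] := rr_small r0 hR e0.
  exists (maxn N 1) => // k /=; rewrite geq_max => /andP[hkN hk1].
  apply: le_trans (M_ub R hk1 (r0 k)) _.
  have := hN k hkN; lra.
split.
  move=> n r hr hn; apply: le_trans (M_lb R hr hn).
  by rewrite gerBl divr_ge0.
move=> r r0 hK hR; apply/cvgrPdist_le => eps e0.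
pose e' := Num.min eps 1 / 4.
have e'0 : 0 < e' by rewrite divr_gt0 // lt_min e0 ltr01.
have e'1 : e' <= eps / 4 by rewrite ler_pM2r // ge_min lexx.
have e'2 : e' <= 1 / 4 by rewrite ler_pM2r // ge_min lexx orbT.
have [N hN] := rr_small r0 hR e'0.
case: (hK 2%N) => N2 _ hN2.
exists (maxn (maxn N N2) 5) => // k /=; rewrite !geq_max => /andP[/andP[hkN hkN2] hk5].
have hr2 : (2 <= r k)%N := hN2 k hkN2.
have k0 : (0 < k)%N by lia.
have kR : 0 < k%:R :> R by rewrite ltr0n.
have rr := hN k hkN.
have rrr : (r k)%:R <= ((r k ^ r k)%:R : R) by rewrite ler_nat r_le_rr.
have ub := M_ub R k0 (r0 k).
have hn : (2 * r k + 2 < k)%N.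
  have h5 : 5%:R <= k%:R :> R by rewrite ler_nat.
  have : (2 * r k + 2)%:R < k%:R :> R.
    rewrite natrD natrM.
    have : e' * k%:R <= 1/4 * k%:R by rewrite ler_wpM2r // ltW.
    lra.
  by rewrite ltr_nat.
have lb := M_lb R hr2 hn.
have lb2 : k%:R - 2 * (r k)%:R <= ((k - 2 * r k + 3)%:R : R).
  have : (k <= (k - 2 * r k + 3) + 2 * r k)%N by lia.
  rewrite -(ler_nat R) natrD natrM; lra.
have ek : e' * k%:R <= eps / 4 * k%:R by rewrite ler_wpM2r // ltW.
have h1 : M R k (r k) / k%:R <= 1 + eps.
  rewrite ler_pdivrMr //; lra.
have h2 : 1 - eps <= M R k (r k) / k%:R.
  rewrite ler_pdivlMr //; lra.
rewrite ler_norml; apply/andP; split; lra.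
Qed.
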